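(* Let $\mathbf D$ be a regular $2^r$-run design given by distinct $b_1,\dots,b_n\in\Delta_r$ with $\operatorname{rank}(b_1,\dots,b_n)=r$, $n\ge 4$. Then there are constants $c_1,c_2,c_3$ depending only on $n$ and $r$ (not on the particular design) such that: (a) $A^{(1)}_3=c_1-A_3(\widetilde T)$; (b) $A^{(1)}_4=c_2+A_3(\widetilde T)+A_4(\widetilde T)$; (c) if moreover $b_1,b_2,b_3,b_4$ are linearly independent and $b_1+b_2\notin\{b_5,\dots,b_n\}$, $b_3+b_4\notin\{b_5,\dots,b_n\}$, then $A^{(2)}_2=c_3+A^{(12)}_2(T_{12})+A^{(34)}_2(T_{34})$.
   Context: $\Delta_r$ is the set of nonzero vectors of $\mathrm{GF}(2)^r$ (all arithmetic mod 2). ''Number of $m$-subsets of a list with sum in $S$'' counts $m$-element subsets of the listed (distinct) vectors whose sum lies in $S$. $A^{(1)}_m$: number of $m$-subsets of $\{b_2,b_4,b_5,\dots,b_n\}$ with sum $0$. $A^{(21)}_m$: $m$-subsets of $\{b_4,\dots,b_n\}$ with sum in $\{b_1,b_1+b_2\}$; $A^{(22)}_m$: $m$-subsets of $\{b_2,b_5,\dots,b_n\}$ with sum in $\{b_3,b_3+b_4\}$; $A^{(2)}_m=A^{(21)}_m+A^{(22)}_m$. $\widetilde T=\Delta_r\setminus\{b_2,b_4,b_5,\dots,b_n\}$; $A_m(\widetilde T)$: number of $m$-subsets of $\widetilde T$ with sum $0$. $T_{12}=\widetilde T\setminus\{b_1,b_1+b_2\}$, $T_{34}=\widetilde T\setminus\{b_3,b_3+b_4\}$;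 $A^{(12)}_2(T_{12})$: number of 2-subsets of $T_{12}$ with sum in $\{b_1,b_1+b_2\}$; $A^{(34)}_2(T_{34})$: number of 2-subsets of $T_{34}$ with sum in $\{b_3,b_3+b_4\}$. *)

(* Defs.v *)
From HB Require Import structures.
From mathcomp Require Import all_boot all_order all_algebra.
Set Implicit Arguments. Unset Strict Implicit. Unset Printing Implicit Defensive.
Import GRing.Theory.
Local Open Scope ring_scope.

Notation vec r := 'rV['F_2]_r.

Definition Delta (r : nat) : {set vec r} := [set x : vec r | x != 0].

(* { b_lo, ..., b_hi } for a sequence b indexed by nat (1-based as in paper) *)
Definition bset (r : nat) (b : nat -> vec r) (lo hi : nat) : {set vec r} :=
  [set x in map b (index_iota lo hi.+1)].

Definition cnt (r : nat) (S : {set vec r}) (m : nat) (Z : {set vec r}) : nat :=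
  #|[set X : {set vec r} | [&& X \subset S, #|X| == m & \sum_(x in X) x \in Z]]|.

(* Main.v *)
Require Import Defs.
From HB Require Import structures.
From mathcomp Require Import all_boot all_order all_algebra.
From mathcomp Require Import ring zify.
Set Implicit Arguments. Unset Strict Implicit. Unset Printing Implicit Defensive.
Import GRing.Theory.
Local Open Scope ring_scope.


Lemma vv0 (r : nat) (v : vec r) : v + v = 0.
Proof. apply/rowP => i; rewrite !mxE; apply: addrr_pchar2; exact: pchar_Fp. Qed.

Lemma oppv (r : nat) (v : vec r) : - v = v.
Proof. by rewrite -[RHS]subr0 -(vv0 v) opprD addrA subrr add0r. Qed.

Definition Cz (r : nat) (A : {set vec r}) (m : nat) (z : vec r) : nat :=
  #|[set X : {set vec r} | [&& X \subset A, #|X| == m & \sum_(x in X) x == z]]|.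

Lemma Cz_rec (r : nat) (A : {set vec r}) m z :
  (m.+1 * Cz A m.+1 z = \sum_(x in A) Cz (A :\ x) m (z - x))%N.
Proof.
rewrite /Cz.
set F := [set X : {set vec r} | _].
have -> : (m.+1 * #|F| = \sum_(X in F) #|X|)%N.
  rewrite mulnC -sum_nat_const; apply: eq_bigr => X; rewrite inE.
  by case/and3P => _ /eqP ->.
have -> : (\sum_(X in F) #|X| = \sum_(X in F) \sum_(x in A) (x \in X))%N.
  apply: eq_bigr => X; rewrite inE => /and3P [sXA _ _].
  rewrite -sum1_card big_mkcond [RHS]big_mkcond /=; apply: eq_bigr => x _.
  by case xX: (x \in X); [rewrite (subsetP sXA) | case: (x \in A)].
rewrite exchange_big /=; apply: eq_bigr => x xA.
rewrite (eq_bigr (fun X : {set vec r} => if x \in X then 1 else 0)%N); last by move=> X _; case: (x \in X).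
rewrite -big_mkcondr /= sum1_card.
set G := [set Y : {set vec r} | _].
have E : [pred X in F | x \in X] =i [set x |: Y | Y in G].
  move=> X; rewrite !inE; apply/idP/imsetP.
  - case/andP => /and3P [sXA /eqP cX /eqP sX] xX.
    exists (X :\ x); last by rewrite setD1K.
    rewrite /G inE setSD //= -[m]/(m.+1.-1) -cX (cardsD1 x X) xX /=.
    by rewrite add0n eqxx -sX (big_setD1 _ xX) /= addrAC subrr add0r.
  - case=> Y; rewrite /G inE => /and3P [sYA /eqP cY /eqP sY] ->.
    have xY : x \notin Y by apply/negP => /(subsetP sYA); rewrite !inE eqxx.
    rewrite !inE eqxx /= cardsU1 xY cY eqxx andbT /=.
    rewrite (big_setU1 _ xY) /= sY addrC subrK eqxx andbT.
    apply/subsetP => y; rewrite !inE => /predU1P [-> //|/(subsetP sYA)].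
    by rewrite !inE => /andP[].
rewrite (eq_card E) card_in_imset // => Y1 Y2; rewrite /G !inE.
move=> /and3P [s1 _ _] /and3P [s2 _ _] e.
have x1 : x \notin Y1 by apply/negP => /(subsetP s1); rewrite !inE eqxx.
have x2 : x \notin Y2 by apply/negP => /(subsetP s2); rewrite !inE eqxx.
by rewrite -(setU1K x1) -(setU1K x2) e.
Qed.

Lemma Cz0 (r : nat) (A : {set vec r}) w : Cz A 0 w = (w == 0).
Proof.
rewrite /Cz; case: eqP => [->|ne].
  rewrite (_ : [set X | _] = [set set0]) ?cards1 //; apply/setP => X; rewrite !inE.
  apply/and3P/eqP => [[_ /eqP/cards0_eq -> //]|->].
  by rewrite sub0set cards0 big_set0.
apply/eqP; rewrite cards_eq0; apply/eqP/setP => X; rewrite !inE.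
apply/and3P => [[_ /eqP/cards0_eq ->]]; rewrite big_set0 => /eqP h.
by apply: ne; rewrite h.
Qed.

Lemma Cz1 (r : nat) (A : {set vec r}) z : Cz A 1 z = (z \in A).
Proof.
rewrite -[LHS]mul1n Cz_rec.
rewrite (eq_bigr (fun x => nat_of_bool (x == z))); last first.
  by move=> x _; rewrite Cz0 subr_eq0 eq_sym.
case zA: (z \in A).
  rewrite (big_setD1 z zA) eqxx big1 //= => x; rewrite !inE.
  by case/andP => /negbTE ->.
rewrite big1 // => x xA; case: eqP => // exz.
by rewrite -exz xA in zA.
Qed.

Lemma addv_eq (r : nat) (a b c : vec r) : (a + b == c) = (a == c + b).
Proof. by apply/eqP/eqP => [<-|->]; rewrite -addrA vv0 addr0. Qed.

Lemma addv_eqr (r : nat) (x z : vec r) : (x + z == x) = (z == 0).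
Proof. by rewrite addv_eq -{1}(addr0 x) (inj_eq (addrI x)) eq_sym. Qed.

Lemma subvE (r : nat) (a b : vec r) : a - b = b + a.
Proof. by rewrite oppv addrC. Qed.

Lemma N2 (r : nat) (A : {set vec r}) z : z != 0 ->
  (2 * Cz A 2 z = \sum_(x in A) ((x + z)%R \in A))%N.
Proof.
move=> z0; rewrite Cz_rec; apply: eq_bigr => x xA.
by rewrite Cz1 subvE !inE addv_eqr (negbTE z0).
Qed.

Lemma N3 (r : nat) (A : {set vec r}) : 0 \notin A ->
  (6 * Cz A 3 0 = \sum_(x in A) \sum_(y in A) ((x + y)%R \in A))%N.
Proof.
move=> A0; rewrite (_ : 6 = 2 * 3)%N // -mulnA Cz_rec big_distrr /=.
apply: eq_bigr => x xA.
have x0 : x != 0 by apply: contraNneq A0 => <-.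
rewrite sub0r oppv N2 // (big_setD1 x xA) /= vv0 (negbTE A0) add0n.
apply: eq_bigr => y; rewrite !inE => /andP [yx yA].
have y0 : (y == 0) = false by apply/negbTE; apply: contraNneq A0 => <-.
by rewrite [y + x]addrC addv_eqr y0.
Qed.

Lemma N4 (r : nat) (A : {set vec r}) : 0 \notin A ->
  (24 * Cz A 4 0 + #|A| * #|A| + 2 * (#|A| * (#|A| - 1)) =
   \sum_(x in A) \sum_(y in A) \sum_(u in A) ((u + (x + y))%R \in A))%N.
Proof.
move=> A0.
have inner : forall x y, x \in A -> y \in A :\ x ->
  (2 * Cz (A :\ x :\ y) 2 (x - y) + 2 = \sum_(u in A) ((u + (x + y))%R \in A))%N.
  move=> x y xA yAx; move: (yAx); rewrite !inE => /andP [yx yA].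
  have xy0 : x + y != 0 by rewrite -subvE subr_eq0.
  rewrite subvE addrC N2 // (big_setD1 x xA) (big_setD1 y yAx) /=.
  rewrite [x + (x + y)]addrA vv0 add0r yA [y + (x + y)]addrCA vv0 addr0 xA.
  rewrite /= !add1n addn2; congr (_.+2); apply: eq_bigr => u.
  rewrite !inE => /andP [uy /andP [ux uA]].
  rewrite addv_eq [y + (x + y)]addrCA vv0 addr0 (negbTE ux) /=.
  by rewrite addv_eq [x + (x + y)]addrA vv0 add0r (negbTE uy).
have Rxx : forall x, (\sum_(u in A) ((u + (x + x))%R \in A) = #|A|)%N.
  by move=> x; rewrite -sum1_card; apply: eq_bigr => u uA; rewrite vv0 addr0 uA.
have H3 : (24 * Cz A 4 0 =
   \sum_(x in A) \sum_(y in A :\ x) 2 * Cz (A :\ x :\ y) 2 (x - y))%N.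
  rewrite (_ : 24 = 2 * 3 * 4)%N // -mulnA Cz_rec big_distrr /=.
  apply: eq_bigr => x xA.
  by rewrite sub0r oppv -mulnA Cz_rec big_distrr.
have -> : (\sum_(x in A) \sum_(y in A) \sum_(u in A) ((u + (x + y))%R \in A) =
   \sum_(x in A) (#|A| + (\sum_(y in A :\ x) 2 * Cz (A :\ x :\ y) 2 (x - y))
      + 2 * (#|A| - 1)))%N.
  apply: eq_bigr => x xA; rewrite (big_setD1 x xA) /= Rxx -addnA; congr (_ + _).
  rewrite (eq_bigr (fun y => 2 * Cz (A :\ x :\ y) 2 (x - y) + 2))%N; last first.
    by move=> y yAx; rewrite inner.
  rewrite big_split /= sum_nat_const (cardsD1 x A) xA add1n subn1 /=.
  by rewrite mulnC.
rewrite !big_split /= !sum_nat_const -H3.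
rewrite muln0 addn0 mul2n -addnn; ring.
Qed.



Definition fone (r : nat) : vec r -> int := fun _ => 1.
Definition fdel (r : nat) : vec r -> int := fun x => if x == 0 then 1 else 0.
Definition ind (r : nat) (A : {set vec r}) : vec r -> int :=
  fun x => if x \in A then 1 else 0.
Definition fadd (r : nat) (f g : vec r -> int) : vec r -> int := fun x => f x + g x.
Definition fsub (r : nat) (f g : vec r -> int) : vec r -> int := fun x => f x - g x.
Definition Sm (r : nat) (f : vec r -> int) : int := \sum_x f x.
Definition Sp (r : nat) (f g : vec r -> int) : int := \sum_x f x * g x.
Definition P (r : nat) (f g h : vec r -> int) : int :=
  \sum_x \sum_y f x * g y * h (x + y).
Definition Q (r : nat) (f g h k : vec r -> int) : int :=
  \sum_x \sum_y \sum_u f x * g y * h u * k (x + y + u).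

Lemma sum_tr (r : nat) (F : vec r -> int) c : \sum_x F (x + c) = \sum_x F x.
Proof. by rewrite [RHS](reindex_inj (addIr c)). Qed.

Lemma sum_deltal (r : nat) (F : vec r -> int) : \sum_x fdel x * F x = F 0.
Proof.
rewrite (bigD1 0) //= big1 => [|x /negbTE x0]; rewrite /fdel ?x0 ?eqxx.
  by rewrite mul1r addr0.
by rewrite mul0r.
Qed.

Lemma cuc (r : nat) (c u : vec r) : c + (u + c) = u.
Proof. by rewrite addrCA vv0 addr0. Qed.

Lemma P_C12 (r : nat) (f g h : vec r -> int) : P f g h = P g f h.
Proof.
rewrite /P exchange_big; apply: eq_bigr => x _; apply: eq_bigr => y _.
by rewrite (addrC y x); ring.
Qed.

Lemma P_C23 (r : nat) (f g h : vec r -> int) : P f g h = P f h g.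
Proof.
rewrite /P; apply: eq_bigr => x _; rewrite [RHS](reindex_inj (addIr x)) /=.
by apply: eq_bigr => y _; rewrite cuc addrC; ring.
Qed.

Lemma Q_C12 (r : nat) (f g h k : vec r -> int) : Q f g h k = Q g f h k.
Proof.
rewrite /Q exchange_big; apply: eq_bigr => x _; apply: eq_bigr => y _.
by apply: eq_bigr => u _; rewrite (addrC y x); ring.
Qed.

Lemma Q_C23 (r : nat) (f g h k : vec r -> int) : Q f g h k = Q f h g k.
Proof.
rewrite /Q; apply: eq_bigr => x _; rewrite exchange_big.
apply: eq_bigr => y _; apply: eq_bigr => u _.
by rewrite addrAC; ring.
Qed.

Lemma Q_C34 (r : nat) (f g h k : vec r -> int) : Q f g h k = Q f g k h.
Proof.
rewrite /Q; apply: eq_bigr => x _; apply: eq_bigr => y _.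
rewrite [RHS](reindex_inj (addIr (x + y))) /=.
by apply: eq_bigr => u _; rewrite cuc addrC; ring.
Qed.

Lemma P_B1 (r : nat) (f f' g h : vec r -> int) :
  P (fsub f f') g h = P f g h - P f' g h.
Proof.
rewrite /P -sumrB; apply: eq_bigr => x _; rewrite -sumrB.
by apply: eq_bigr => y _; rewrite /fsub; ring.
Qed.

Lemma P_D1 (r : nat) (f f' g h : vec r -> int) :
  P (fadd f f') g h = P f g h + P f' g h.
Proof.
rewrite /P -big_split; apply: eq_bigr => x _; rewrite -big_split.
by apply: eq_bigr => y _; rewrite /fadd /=; ring.
Qed.

Lemma P_B2 (r : nat) (f g g' h : vec r -> int) :
  P f (fsub g g') h = P f g h - P f g' h.
Proof. by rewrite P_C12 P_B1 [P g f h]P_C12 [P g' f h]P_C12. Qed.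
Lemma P_B3 (r : nat) (f g h h' : vec r -> int) :
  P f g (fsub h h') = P f g h - P f g h'.
Proof. by rewrite P_C23 P_B2 [P f h g]P_C23 [P f h' g]P_C23. Qed.
Lemma P_D2 (r : nat) (f g g' h : vec r -> int) :
  P f (fadd g g') h = P f g h + P f g' h.
Proof. by rewrite P_C12 P_D1 [P g f h]P_C12 [P g' f h]P_C12. Qed.
Lemma P_D3 (r : nat) (f g h h' : vec r -> int) :
  P f g (fadd h h') = P f g h + P f g h'.
Proof. by rewrite P_C23 P_D2 [P f h g]P_C23 [P f h' g]P_C23. Qed.

Lemma Q_B1 (r : nat) (f f' g h k : vec r -> int) :
  Q (fsub f f') g h k = Q f g h k - Q f' g h k.
Proof.
rewrite /Q -sumrB; apply: eq_bigr => x _; rewrite -sumrB.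
apply: eq_bigr => y _; rewrite -sumrB.
by apply: eq_bigr => u _; rewrite /fsub; ring.
Qed.

Lemma Q_D1 (r : nat) (f f' g h k : vec r -> int) :
  Q (fadd f f') g h k = Q f g h k + Q f' g h k.
Proof.
rewrite /Q -big_split; apply: eq_bigr => x _; rewrite -big_split.
apply: eq_bigr => y _; rewrite -big_split.
by apply: eq_bigr => u _; rewrite /fadd /=; ring.
Qed.

Lemma Q_B2 (r : nat) (f g g' h k : vec r -> int) :
  Q f (fsub g g') h k = Q f g h k - Q f g' h k.
Proof. by rewrite Q_C12 Q_B1 [Q g f h k]Q_C12 [Q g' f h k]Q_C12. Qed.
Lemma Q_B3 (r : nat) (f g h h' k : vec r -> int) :
  Q f g (fsub h h') k = Q f g h k - Q f g h' k.
Proof. by rewrite Q_C23 Q_B2 [Q f h g k]Q_C23 [Q f h' g k]Q_C23. Qed.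
Lemma Q_B4 (r : nat) (f g h k k' : vec r -> int) :
  Q f g h (fsub k k') = Q f g h k - Q f g h k'.
Proof. by rewrite Q_C34 Q_B3 [Q f g k h]Q_C34 [Q f g k' h]Q_C34. Qed.
Lemma Q_D2 (r : nat) (f g g' h k : vec r -> int) :
  Q f (fadd g g') h k = Q f g h k + Q f g' h k.
Proof. by rewrite Q_C12 Q_D1 [Q g f h k]Q_C12 [Q g' f h k]Q_C12. Qed.
Lemma Q_D3 (r : nat) (f g h h' k : vec r -> int) :
  Q f g (fadd h h') k = Q f g h k + Q f g h' k.
Proof. by rewrite Q_C23 Q_D2 [Q f h g k]Q_C23 [Q f h' g k]Q_C23. Qed.
Lemma Q_D4 (r : nat) (f g h k k' : vec r -> int) :
  Q f g h (fadd k k') = Q f g h k + Q f g h k'.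
Proof. by rewrite Q_C34 Q_D3 [Q f g k h]Q_C34 [Q f g k' h]Q_C34. Qed.

Lemma P_one1 (r : nat) (g h : vec r -> int) : P (@fone r) g h = Sm g * Sm h.
Proof.
rewrite /P /Sm exchange_big mulr_suml; apply: eq_bigr => y _.
by rewrite -(sum_tr h y) mulr_sumr; apply: eq_bigr => x _; rewrite /fone mul1r.
Qed.
Lemma P_one2 (r : nat) (f h : vec r -> int) : P f (@fone r) h = Sm f * Sm h.
Proof. by rewrite P_C12 P_one1. Qed.
Lemma P_one3 (r : nat) (f g : vec r -> int) : P f g (@fone r) = Sm f * Sm g.
Proof. by rewrite P_C23 P_one2. Qed.

Lemma P_delta1 (r : nat) (g h : vec r -> int) : P (@fdel r) g h = Sp g h.
Proof.
rewrite /P /Sp.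
transitivity (\sum_x fdel x * (\sum_y g y * h (x + y))).
  by apply: eq_bigr => x _; rewrite mulr_sumr; apply: eq_bigr => y _; rewrite mulrA.
by rewrite sum_deltal; apply: eq_bigr => y _; rewrite add0r.
Qed.
Lemma P_delta2 (r : nat) (f h : vec r -> int) : P f (@fdel r) h = Sp f h.
Proof. by rewrite P_C12 P_delta1. Qed.
Lemma P_delta3 (r : nat) (f g : vec r -> int) : P f g (@fdel r) = Sp f g.
Proof. by rewrite P_C23 P_delta2. Qed.

Lemma Q_one1 (r : nat) (g h k : vec r -> int) :
  Q (@fone r) g h k = Sm g * Sm h * Sm k.
Proof.
rewrite /Q exchange_big.
transitivity (\sum_y \sum_u g y * h u * Sm k).
  apply: eq_bigr => y _; rewrite exchange_big; apply: eq_bigr => u _.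
  rewrite /Sm -(sum_tr k (y + u)) mulr_sumr; apply: eq_bigr => x _.
  by rewrite /fone addrA; ring.
transitivity (\sum_y g y * (Sm h * Sm k)).
  apply: eq_bigr => y _; rewrite [Sm h]/Sm mulr_suml mulr_sumr.
  by apply: eq_bigr => u _; ring.
by rewrite -mulr_suml mulrA.
Qed.
Lemma Q_one2 (r : nat) (f h k : vec r -> int) :
  Q f (@fone r) h k = Sm f * Sm h * Sm k.
Proof. by rewrite Q_C12 Q_one1. Qed.
Lemma Q_one3 (r : nat) (f g k : vec r -> int) :
  Q f g (@fone r) k = Sm f * Sm g * Sm k.
Proof. by rewrite Q_C23 Q_one2. Qed.
Lemma Q_one4 (r : nat) (f g h : vec r -> int) :
  Q f g h (@fone r) = Sm f * Sm g * Sm h.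
Proof. by rewrite Q_C34 Q_one3. Qed.

Lemma Q_delta1 (r : nat) (g h k : vec r -> int) : Q (@fdel r) g h k = P g h k.
Proof.
rewrite /Q /P.
transitivity (\sum_x fdel x * (\sum_y \sum_u g y * h u * k (x + y + u))).
  apply: eq_bigr => x _; rewrite mulr_sumr; apply: eq_bigr => y _.
  by rewrite mulr_sumr; apply: eq_bigr => u _; ring.
by rewrite sum_deltal; apply: eq_bigr => y _; apply: eq_bigr => u _; rewrite add0r.
Qed.
Lemma Q_delta2 (r : nat) (f h k : vec r -> int) : Q f (@fdel r) h k = P f h k.
Proof. by rewrite Q_C12 Q_delta1. Qed.
Lemma Q_delta3 (r : nat) (f g k : vec r -> int) : Q f g (@fdel r) k = P f g k.
Proof. by rewrite Q_C23 Q_delta2. Qed.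
Lemma Q_delta4 (r : nat) (f g h : vec r -> int) : Q f g h (@fdel r) = P f g h.
Proof. by rewrite Q_C34 Q_delta3. Qed.

Lemma Sp_deltal (r : nat) (g : vec r -> int) : Sp (@fdel r) g = g 0.
Proof. exact: sum_deltal. Qed.
Lemma Sp_deltar (r : nat) (g : vec r -> int) : Sp g (@fdel r) = g 0.
Proof. by rewrite /Sp -sum_deltal; apply: eq_bigr => x _; rewrite mulrC. Qed.
Lemma Sp_ind (r : nat) (A : {set vec r}) : Sp (ind A) (ind A) = #|A|%:Z.
Proof.
rewrite /Sp -sum1_card (big_morph Posz PoszD (erefl _)) [RHS]big_mkcond /=.
by apply: eq_bigr => x _; rewrite /ind; case: (x \in A).
Qed.
Lemma Sm_ind (r : nat) (A : {set vec r}) : Sm (ind A) = #|A|%:Z.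
Proof. by rewrite -Sp_ind; apply: eq_bigr => x _; rewrite /ind; case: (x \in A). Qed.
Lemma Sm_one (r : nat) : Sm (@fone r) = #|{: vec r}|%:Z.
Proof. by rewrite /Sm /fone sumr_const natz. Qed.
Lemma Sm_delta (r : nat) : Sm (@fdel r) = 1.
Proof. by rewrite /Sm -[RHS](sum_deltal (@fone r)); apply: eq_bigr => x _; rewrite /fone mulr1. Qed.
Lemma Sm_fadd (r : nat) (f g : vec r -> int) : Sm (fadd f g) = Sm f + Sm g.
Proof. exact: big_split. Qed.
Lemma Sm_fsub (r : nat) (f g : vec r -> int) : Sm (fsub f g) = Sm f - Sm g.
Proof. exact: sumrB. Qed.


Lemma sum_in (r : nat) (A : {set vec r}) (F : vec r -> int) :
  \sum_(x in A) F x = \sum_x ind A x * F x.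
Proof.
rewrite big_mkcond /=; apply: eq_bigr => x _; rewrite /ind.
by case: (x \in A); rewrite ?mul1r ?mul0r.
Qed.

Lemma natsum (r : nat) (A : {set vec r}) (F : vec r -> nat) :
  (\sum_(x in A) F x)%:Z = \sum_(x in A) (F x)%:Z.
Proof. by rewrite (big_morph Posz PoszD (erefl _)). Qed.

Lemma bool_ind (r : nat) (A : {set vec r}) y : (nat_of_bool (y \in A))%:Z = ind A y.
Proof. by rewrite /ind; case: (y \in A). Qed.

Lemma P_cnt (r : nat) (A : {set vec r}) : 0 \notin A ->
  (6 * Cz A 3 0)%:Z = P (ind A) (ind A) (ind A).
Proof.
move=> A0; rewrite N3 // natsum sum_in /P; apply: eq_bigr => x _.
rewrite natsum sum_in mulr_sumr; apply: eq_bigr => y _.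
by rewrite bool_ind mulrA.
Qed.

Lemma nm1 (k : nat) : (k * (k - 1))%:Z = k%:Z * (k%:Z - 1).
Proof.
by case: k => [|k] //; rewrite subSS subn0 PoszM -[(k.+1)%:Z]/((k + 1)%N%:Z) PoszD addrK.
Qed.

Lemma Q_cnt (r : nat) (A : {set vec r}) : 0 \notin A ->
  (24 * Cz A 4 0)%:Z + #|A|%:Z * #|A|%:Z + 2 * (#|A|%:Z * (#|A|%:Z - 1))
  = Q (ind A) (ind A) (ind A) (ind A).
Proof.
move=> A0; have := N4 A0; move/(congr1 Posz).
set a := (24 * Cz A 4 0)%N; set b := (#|A| * #|A|)%N; set c := (2 * _)%N.
rewrite PoszD PoszD [Posz c]PoszM nm1 [Posz a]PoszM [Posz b]PoszM => ->.
rewrite natsum sum_in /Q; apply: eq_bigr => x _.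
rewrite natsum sum_in mulr_sumr; apply: eq_bigr => y _.
rewrite natsum sum_in !mulr_sumr; apply: eq_bigr => u _.
by rewrite bool_ind addrC; ring.
Qed.

Lemma R_cnt (r : nat) (A : {set vec r}) z : z != 0 ->
  (2 * Cz A 2 z)%:Z = \sum_x ind A x * ind A (x + z).
Proof.
by move=> z0; rewrite N2 // natsum sum_in; apply: eq_bigr => x _; rewrite bool_ind.
Qed.

Lemma P_ext (r : nat) (f f' g g' h h' : vec r -> int) :
  f =1 f' -> g =1 g' -> h =1 h' -> P f g h = P f' g' h'.
Proof.
move=> ef eg eh; apply: eq_bigr => x _; apply: eq_bigr => y _.
by rewrite ef eg eh.
Qed.

Lemma Q_ext (r : nat) (f f' g g' h h' k k' : vec r -> int) :
  f =1 f' -> g =1 g' -> h =1 h' -> k =1 k' -> Q f g h k = Q f' g' h' k'.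
Proof.
move=> ef eg eh ek; apply: eq_bigr => x _; apply: eq_bigr => y _.
by apply: eq_bigr => u _; rewrite ef eg eh ek.
Qed.

Lemma Sm_ext (r : nat) (f f' : vec r -> int) : f =1 f' -> Sm f = Sm f'.
Proof. by move=> ef; apply: eq_bigr => x _; rewrite ef. Qed.

Definition K1 (M s : int) : int := M ^+ 2 - 3 * M * (s + 1) + 3 * (s + 1) ^+ 2 - 3 * s - 1.
Definition K2 (M s : int) : int :=
  (M - 1 - s) * (M - 1 - s) + 2 * ((M - 1 - s) * (M - 1 - s - 1))
  - M ^+ 3 + 4 * M ^+ 2 * (s + 1) - 6 * M * (s + 1) ^+ 2 + 4 * (s + 1) ^+ 3
  - s * s - 2 * (s * (s - 1)) - 4 * K1 M s - 6 * s - 1.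

Lemma ind0 (r : nat) (A : {set vec r}) : 0 \notin A -> ind A 0 = 0.
Proof. by rewrite /ind => /negbTE ->. Qed.
Lemma fdel0 (r : nat) : @fdel r 0 = 1.
Proof. by rewrite /fdel eqxx. Qed.

Lemma indT (r : nat) (S : {set vec r}) : 0 \notin S ->
  ind (Delta r :\: S) =1 fsub (@fone r) (fadd (@fdel r) (ind S)).
Proof.
move=> S0 x; rewrite /ind /fsub /fadd /fone /fdel /Delta !inE.
case: eqP => [->|_] /=; first by rewrite (negbTE S0).
by case: (x \in S).
Qed.

Lemma partA (r : nat) (S : {set vec r}) : 0 \notin S ->
  (6 * Cz S 3 0)%:Z + (6 * Cz (Delta r :\: S) 3 0)%:Z
  = K1 #|{: vec r}|%:Z #|S|%:Z.
Proof.
move=> S0.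
have T0 : 0 \notin Delta r :\: S by rewrite !inE eqxx andbF.
rewrite !P_cnt // (P_ext (indT S0) (indT S0) (indT S0)).
rewrite ?P_B1 ?P_B2 ?P_B3 ?P_one1 ?P_one2 ?P_one3.
rewrite ?P_D1 ?P_D2 ?P_D3 ?P_delta1 ?P_delta2 ?P_delta3 ?Sp_deltal ?Sp_deltar.
rewrite ?Sm_fadd ?Sm_one ?Sm_delta ?Sm_ind ?Sp_ind ?ind0 // ?fdel0 /K1.
ring.
Qed.

Lemma cardT (r : nat) (S : {set vec r}) : 0 \notin S ->
  #|Delta r :\: S|%:Z = #|{: vec r}|%:Z - 1 - #|S|%:Z.
Proof.
move=> S0; rewrite -Sm_ind (Sm_ext (indT S0)) Sm_fsub Sm_fadd Sm_one Sm_delta Sm_ind.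
by rewrite opprD addrA.
Qed.

Lemma partB (r : nat) (S : {set vec r}) : 0 \notin S ->
  (24 * Cz S 4 0)%:Z = (24 * Cz (Delta r :\: S) 4 0)%:Z
     + (24 * Cz (Delta r :\: S) 3 0)%:Z + K2 #|{: vec r}|%:Z #|S|%:Z.
Proof.
move=> S0.
have T0 : 0 \notin Delta r :\: S by rewrite !inE eqxx andbF.
have hA := partA S0.
have qS := Q_cnt S0; have qT := Q_cnt T0; have pS := P_cnt S0.
rewrite (Q_ext (indT S0) (indT S0) (indT S0) (indT S0)) in qT.
rewrite ?Q_B1 ?Q_B2 ?Q_B3 ?Q_B4 ?Q_one1 ?Q_one2 ?Q_one3 ?Q_one4 in qT.
rewrite ?Q_D1 ?Q_D2 ?Q_D3 ?Q_D4 ?Q_delta1 ?Q_delta2 ?Q_delta3 ?Q_delta4 in qT.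
rewrite ?P_D1 ?P_D2 ?P_D3 ?P_delta1 ?P_delta2 ?P_delta3 ?Sp_deltal ?Sp_deltar in qT.
rewrite ?Sm_fadd ?Sm_one ?Sm_delta ?Sm_ind ?Sp_ind ?ind0 // ?fdel0 in qT.
rewrite -qS -pS (cardT S0) in qT.
rewrite !PoszM in qT hA *.
rewrite /K2 /K1 in hA *.
lia.
Qed.

Lemma pairL (r : nat) (W A : {set vec r}) z : z != 0 -> A \subset W ->
  (forall x, (x + z \in W) = (x \in W)) ->
  (2 * Cz (W :\: A) 2 z)%:Z = #|W|%:Z - 2 * #|A|%:Z + (2 * Cz A 2 z)%:Z.
Proof.
move=> z0 sAW cW; rewrite !R_cnt //.
have iWA : forall x, ind A x * ind W x = ind A x.
  by move=> x; rewrite /ind; case xA: (x \in A); rewrite ?mul0r // (subsetP sAW).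
transitivity (\sum_x (ind W x * ind W x - ind W (x + z) * ind A (x + z)
   - ind A x * ind W x + ind A x * ind A (x + z))).
  apply: eq_bigr => x _.
  have e : forall y, ind (W :\: A) y = ind W y - ind A y.
    move=> y; rewrite /ind !inE; case yA: (y \in A); last by case: (y \in W); rewrite subr0.
    by rewrite (subsetP sAW).
  have iW : ind W (x + z) = ind W x by rewrite /ind cW.
  rewrite !e iW; ring.
rewrite big_split /= !sumrB.
rewrite (sum_tr (fun x => ind W x * ind A x) z).
have -> : \sum_x ind A x * ind W x = #|A|%:Z.
  by rewrite -Sm_ind; apply: eq_bigr => x _; rewrite iWA.
have -> : \sum_x ind W x * ind A x = #|A|%:Z.
  by rewrite -Sm_ind; apply: eq_bigr => x _; rewrite mulrC iWA.
rewrite -[\sum_x ind W x * ind W x]/(Sp (ind W) (ind W)) Sp_ind.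
ring.
Qed.


Lemma cnt1 (r : nat) (A : {set vec r}) m z : cnt A m [set z] = Cz A m z.
Proof. by apply: eq_card => X; rewrite !inE. Qed.

Lemma cnt2 (r : nat) (A : {set vec r}) m z1 z2 : z1 != z2 ->
  cnt A m [set z1; z2] = (Cz A m z1 + Cz A m z2)%N.
Proof.
move=> nz; rewrite /cnt /Cz.
set F1 := [set X | _ & _ && (_ == z1)]; set F2 := [set X | _ & _ && (_ == z2)].
transitivity #|F1 :|: F2|.
  by apply: eq_card => X; rewrite !inE -andb_orr -andb_orr.
rewrite cardsU (_ : F1 :&: F2 = set0) ?cards0 ?subn0 //.
apply/setP => X; rewrite !inE; apply/negP => /andP [/and3P [_ _ /eqP e1]].
by case/and3P => _ _ /eqP e2; move: nz; rewrite -e1 -e2 eqxx.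
Qed.

Lemma addv_eq0 (r : nat) (a c : vec r) : (a + c == 0) = (a == c).
Proof. by rewrite addv_eq add0r. Qed.

Lemma cardK (r : nat) (a c : vec r) : a != 0 -> c != 0 -> a != c ->
  #|[set 0; a; c; a + c]| = 4%N.
Proof.
move=> a0 c0 ac.
have -> : [set 0; a; c; a + c] = 0 |: (a |: (c |: [set a + c])).
  by apply/setP => x; rewrite !inE !orbA.
rewrite !cardsU1 cards1 !inE !(eq_sym 0) (negbTE a0) (negbTE c0) addv_eq0 (negbTE ac).
rewrite eq_sym addv_eqr (negbTE c0).
by rewrite eq_sym addrC addv_eqr (negbTE a0).
Qed.

Lemma closC (r : nat) (K : {set vec r}) z :
  (forall y, y \in K -> y + z \in K) -> forall x, (x + z \in ~: K) = (x \in ~: K).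
Proof.
move=> cK x; rewrite !inE; congr negb; apply/idP/idP => [h|/cK //].
by have := cK _ h; rewrite -addrA vv0 addr0.
Qed.

Lemma part_c_gen (r : nat) (a c : vec r) (Sx Tx : {set vec r}) :
  a != 0 -> c != 0 -> a != c ->
  Sx \subset ~: [set 0; a; c; a + c] ->
  Tx = ~: [set 0; a; c; a + c] :\: Sx ->
  (cnt Sx 2 [set a; a + c])%:Z
    = (cnt Tx 2 [set a; a + c])%:Z + 2 * #|Sx|%:Z - (#|{: vec r}|%:Z - 4).
Proof.
move=> a0 c0 ac sS ->.
have aac : a != a + c by rewrite eq_sym addv_eqr.
have ac0 : a + c != 0 by rewrite addv_eq0.
rewrite !cnt2 //.
set K := [set 0; a; c; a + c].
have cW : (4%:Z + #|~: K|%:Z = #|{: vec r}|%:Z).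
  by rewrite -PoszD -(cardK a0 c0 ac); congr Posz; exact: cardsC.
have cl1 : forall x, (x + a \in ~: K) = (x \in ~: K).
  apply: closC => y; rewrite !inE -!orbA => /or4P [] /eqP ->.
  - by rewrite add0r eqxx !orbT.
  - by rewrite vv0 eqxx.
  - by rewrite addrC eqxx !orbT.
  - by rewrite addrAC vv0 add0r eqxx !orbT.
have cl2 : forall x, (x + (a + c) \in ~: K) = (x \in ~: K).
  apply: closC => y; rewrite !inE -!orbA => /or4P [] /eqP ->.
  - by rewrite add0r eqxx !orbT.
  - by rewrite addrA vv0 add0r eqxx !orbT.
  - by rewrite addrCA vv0 addr0 eqxx !orbT.
  - by rewrite vv0 eqxx.
have e1 := pairL a0 sS cl1.
have e2 := pairL ac0 sS cl2.
rewrite !PoszM in e1 e2; rewrite !PoszD.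
rewrite -/K in e1 e2.
set M := #|{: vec r}|%:Z in cW *. set w := #|~: K|%:Z in e1 e2 cW *. set s := #|Sx|%:Z in e1 e2 *. set p := Posz (Cz Sx 2 a) in e1 e2 *. set q := Posz (Cz Sx 2 (a + c)) in e1 e2 *. set p2 := Posz (Cz (~: K :\: Sx) 2 a) in e1 e2 *. set q2 := Posz (Cz (~: K :\: Sx) 2 (a+c)) in e1 e2 *. lia.
Qed.


Lemma bsetP (r : nat) (b : nat -> vec r) lo hi x :
  reflect (exists2 i, (lo <= i <= hi)%N & x = b i) (x \in bset b lo hi).
Proof.
rewrite /bset inE; apply: (iffP mapP) => [[i]|[i]].
  by rewrite mem_index_iota ltnS => h ->; exists i.
by move=> h ->; exists i; rewrite // mem_index_iota ltnS.
Qed.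

Lemma card_bset (r : nat) (b : nat -> vec r) n lo hi :
  (1 <= lo)%N -> (hi <= n)%N -> {in index_iota 1 n.+1 &, injective b} ->
  #|bset b lo hi| = (hi.+1 - lo)%N.
Proof.
move=> h1 h2 inj.
have u : uniq (map b (index_iota lo hi.+1)).
  rewrite map_inj_in_uniq ?iota_uniq // => i j; rewrite !mem_index_iota => hi' hj.
  by apply: inj; rewrite mem_index_iota; lia.
by rewrite /bset cardsE (card_uniqP u) size_map size_iota.
Qed.

Lemma bset_cons (r : nat) (b : nat -> vec r) lo hi :
  (lo <= hi)%N -> bset b lo hi = b lo |: bset b lo.+1 hi.
Proof.
move=> h; apply/setP => x.
by rewrite /bset !inE /index_iota subSn // subSS /= in_cons.
Qed.

Lemma indep_sum (r : nat) (b : nat -> vec r) (c : 'I_4 -> 'F_2) :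
  row_free (\matrix_(i < 4) b i.+1) -> \sum_(i < 4) c i *: b i.+1 = 0 ->
  forall i, c i = 0.
Proof.
move=> rf e i.
have h : (\row_j c j) *m (\matrix_(i < 4) b i.+1) = 0 *m (\matrix_(i < 4) b i.+1).
  by rewrite mul0mx mulmx_sum_row -[RHS]e; apply: eq_bigr => j _; rewrite rowK mxE.
by have := row_free_inj rf h => /rowP /(_ i); rewrite !mxE.
Qed.

Lemma nd124 (r : nat) (b : nat -> vec r) :
  row_free (\matrix_(i < 4) b i.+1) -> b 1%N + b 2%N != b 4%N.
Proof.
move=> rf; apply/eqP => e.
have := indep_sum (c := fun i : 'I_4 => if val i == 2%N then 0 else 1) rf.
rewrite !big_ord_recl big_ord0 /= => /(_ _ ord0) /=.
rewrite !scale1r scale0r add0r addr0 -e addrA vv0 => /(_ erefl) /eqP.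
by rewrite oner_eq0.
Qed.

Lemma nd342 (r : nat) (b : nat -> vec r) :
  row_free (\matrix_(i < 4) b i.+1) -> b 3%N + b 4%N != b 2%N.
Proof.
move=> rf; apply/eqP => e.
have := indep_sum (c := fun i : 'I_4 => if val i == 0%N then 0 else 1) rf.
rewrite !big_ord_recl big_ord0 /= => /(_ _ ord_max) /=.
rewrite !scale1r scale0r add0r addr0 e vv0 => /(_ erefl) /eqP.
by rewrite oner_eq0.
Qed.

Lemma rng (k n : nat) : (1 <= k <= 4)%N -> (4 <= n)%N -> (1 <= k <= n)%N.
Proof. lia. Qed.
Lemma rng4 (i n : nat) : (4 <= i <= n)%N -> (1 <= i <= n)%N.
Proof. lia. Qed.
Lemma rng5 (i n : nat) : (5 <= i <= n)%N -> (1 <= i <= n)%N.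
Proof. lia. Qed.
Lemma gt_ne (i j lo hi : nat) : (lo <= i <= hi)%N -> (j < lo)%N -> i != j.
Proof. lia. Qed.
Lemma ar_k2 (n : nat) : (4 <= n)%N -> (1 + (n.+1 - 5))%N = (n - 3)%N.
Proof. lia. Qed.
Lemma split45 (i n : nat) : (4 <= i <= n)%N -> i = 4%N \/ (5 <= i <= n)%N.
Proof. lia. Qed.

Unset Implicit Arguments.

Theorem theorem4 (n r : nat) :
  exists c1 c2 c3 : int,
  forall b : nat -> 'rV['F_2]_r,
    (4 <= n)%N ->
    (forall i, (1 <= i <= n)%N -> b i \in Delta r) ->
    {in index_iota 1 n.+1 &, injective b} ->
    \rank (\matrix_(i < n) b i.+1) = r ->
    let Tt := Delta r :\: (b 2%N |: bset b 4 n) in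
    (* (a) *)
    ((cnt (b 2%N |: bset b 4 n) 3 [set 0])%:Z = c1 - (cnt Tt 3 [set 0])%:Z) /\
    (* (b) *)
    ((cnt (b 2%N |: bset b 4 n) 4 [set 0])%:Z
       = c2 + (cnt Tt 3 [set 0])%:Z + (cnt Tt 4 [set 0])%:Z) /\
    (* (c) *)
    (row_free (\matrix_(i < 4) b i.+1) ->
     b 1%N + b 2%N \notin bset b 5 n ->
     b 3%N + b 4%N \notin bset b 5 n ->
     let Z12 := [set b 1%N; b 1%N + b 2%N] in
     let Z34 := [set b 3%N; b 3%N + b 4%N] in
     (cnt (bset b 4 n) 2 Z12 + cnt (b 2%N |: bset b 5 n) 2 Z34)%:Z
       = c3 + (cnt (Tt :\: Z12) 2 Z12)%:Z + (cnt (Tt :\: Z34) 2 Z34)%:Z).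
Proof.
exists (K1 #|{: vec r}|%:Z (n - 2)%N%:Z %/ 6)%Z.
exists (K2 #|{: vec r}|%:Z (n - 2)%N%:Z %/ 24)%Z.
exists (2 * (2 * (n - 3)%N%:Z - (#|{: vec r}|%:Z - 4))).
move=> b n4 bD binj _ Tt.
have bnz : forall i, (1 <= i <= n)%N -> (b i == 0) = false.
  by move=> i /bD; rewrite /Delta inE => /negbTE.
have inj : forall i j, (1 <= i <= n)%N -> (1 <= j <= n)%N -> b i = b j -> i = j.
  by move=> i j hi hj; apply: binj; rewrite mem_index_iota ltnS.
have neq : forall i j, (1 <= i <= n)%N -> (1 <= j <= n)%N -> i != j ->
    (b i == b j) = false.
  move=> i j hi hj ij; apply/negbTE/eqP => /(inj _ _ hi hj) /eqP.
  by rewrite (negbTE ij).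
have b2S : b 2%N \notin bset b 4 n.
  apply/negP => /bsetP [i hi e].
  by have := inj 2%N i ltac:(lia) ltac:(lia) e; lia.
have S0 : 0 \notin b 2%N |: bset b 4 n.
  rewrite in_setU1 negb_or eq_sym bnz /=; last by lia.
  apply/negP => /bsetP [i hi e].
  by move: (bnz i ltac:(lia)); rewrite -e eqxx.
have cS : #|b 2%N |: bset b 4 n| = (n - 2)%N.
  by rewrite cardsU1 b2S (card_bset (lo:=4) (hi:=n) _ _ binj) //; lia.
split; [|split].
- rewrite /Tt !cnt1.
  have hA := partA S0; rewrite cS in hA.
  by rewrite -hA !PoszM -mulrDr mulKz // addrK.
- rewrite /Tt !cnt1.
  have hB := partB S0; rewrite cS in hB.
  have -> : K2 #|{: vec r}|%:Z (n - 2)%N%:Z = 24 * ((Cz (b 2%N |: bset b 4 n) 4 0)%:Z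
      - (Cz (Delta r :\: (b 2%N |: bset b 4 n)) 4 0)%:Z
      - (Cz (Delta r :\: (b 2%N |: bset b 4 n)) 3 0)%:Z).
    by rewrite !PoszM in hB; lia.
  by rewrite mulKz //; ring.
move=> rf h12 h34 Z12 Z34.
have r1 := rng (k:=1) erefl n4.
have r2 := rng (k:=2) erefl n4.
have r3 := rng (k:=3) erefl n4.
have r4 := rng (k:=4) erefl n4.
have n1 := bnz _ r1.
have n2 := bnz _ r2.
have n3 := bnz _ r3.
have n4' := bnz _ r4.
have d12 := neq _ _ r1 r2 erefl.
have d34 := neq _ _ r3 r4 erefl.
have e4 : bset b 4 n = b 4%N |: bset b 5 n by apply: bset_cons.
have sub12 : bset b 4 n \subset ~: [set 0; b 1%N; b 2%N; b 1%N + b 2%N].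
  apply/subsetP => x /bsetP [i hi ->]; rewrite !inE (bnz _ (rng4 hi)).
  rewrite (neq _ _ (rng4 hi) r1 (gt_ne (j:=1) hi erefl)).
  rewrite (neq _ _ (rng4 hi) r2 (gt_ne (j:=2) hi erefl)) /=.
  apply/negP => /eqP e.
  case: (split45 hi) => [i4|i5].
    by move: (nd124 rf); rewrite -e i4 eqxx.
  by move/negP: h12; apply; apply/bsetP; exists i.
have sub34 : b 2%N |: bset b 5 n \subset ~: [set 0; b 3%N; b 4%N; b 3%N + b 4%N].
  apply/subsetP => x; rewrite in_setU1 => /orP [/eqP ->|/bsetP [i hi ->]].
    rewrite !inE n2 (neq _ _ r2 r3 erefl) (neq _ _ r2 r4 erefl) /=.
    by rewrite eq_sym (negbTE (nd342 rf)).
  rewrite !inE (bnz _ (rng5 hi)).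
  rewrite (neq _ _ (rng5 hi) r3 (gt_ne (j:=3) hi erefl)).
  rewrite (neq _ _ (rng5 hi) r4 (gt_ne (j:=4) hi erefl)) /=.
  apply/negP => /eqP e.
  by move/negP: h34; apply; apply/bsetP; exists i.
have T12 : Tt :\: Z12 = ~: [set 0; b 1%N; b 2%N; b 1%N + b 2%N] :\: bset b 4 n.
  apply/setP => x; rewrite /Tt /Z12 /Delta !inE.
  by case: (x == 0); case: (x == b 1%N); case: (x == b 2%N);
     case: (x == b 1%N + b 2%N); case: (x \in [seq b i | i <- index_iota 4 n.+1]).
have T34 : Tt :\: Z34 = ~: [set 0; b 3%N; b 4%N; b 3%N + b 4%N] :\: (b 2%N |: bset b 5 n).
  apply/setP => x; rewrite /Tt /Z34 /Delta e4 !inE.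
  by case: (x == 0); case: (x == b 3%N); case: (x == b 4%N); case: (x == b 2%N);
     case: (x == b 3%N + b 4%N); case: (x \in [seq b i | i <- index_iota 5 n.+1]).
have c12 := part_c_gen (negbT n1) (negbT n2) (negbT d12) sub12 T12.
have c34 := part_c_gen (negbT n3) (negbT n4') (negbT d34) sub34 T34.
have k1 : #|bset b 4 n| = (n - 3)%N.
  by rewrite (card_bset (lo:=4) (hi:=n) _ _ binj) // subSS.
have k2 : #|b 2%N |: bset b 5 n| = (n - 3)%N.
  have b2S' : b 2%N \notin bset b 5 n.
    by apply: contra b2S; rewrite e4 => h; rewrite in_setU1 h orbT.
  by rewrite cardsU1 b2S' (card_bset (lo:=5) (hi:=n) _ _ binj) //; exact: ar_k2.
rewrite k1 in c12; rewrite k2 in c34.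
rewrite /Z12 /Z34 PoszD c12 c34; ring.
Qed.
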